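(* Let $\mathcal A$ be a well-structured abstract domain, and let monotone abstract operators $\llbracket e\rrbracket^\#:\mathcal A\to\mathcal A$ be given for each basic command $e$, extended inductively to all programs as described in the context. (1) If $\llbracket e\rrbracket^\#$ is a sound abstraction of $\llbracket e\rrbracket$ for every basic command $e$, then $\llbracket S\rrbracket^\#$ is a sound abstraction of $\llbracket S\rrbracket$ for every program $S$. (2) If $\llbracket e\rrbracket^\#$ is a complete abstraction of $\llbracket e\rrbracket$ for every basic command $e$, then $\llbracket S\rrbracket^\#$ is a complete abstraction of $\llbracket S\rrbracket$ for every program $S$.
   Context: Fix a finite set $V$ of quantum variables, each a qubit with state space $\mathcal H_q\cong\mathbb C^2$; for $W\subseteq V$, $\mathcal H_W=\bigotimes_{q\in W}\mathcal H_q$. Operators and subspaces on $\mathcal H_W$ are identified with their cylindrical extensions to $\mathcal H_V$, and a subspace is identified with its orthogonal projector; $P^\perp$ is the orthocomplement. $\mathcal D(\mathcal H_V)$ is the set of partial density operators (positive, trace $\le1$). Programs: $S::=\mathbf{skip}\mid \bar q:=|0\rangle\mid \bar q\mathrel{*{=}}U\mid \mathbf{assert}\ P[\bar q]\mid S_0;S_1\mid \mathbf{if}\ P[\bar q]\ \mathbf{then}\ S_1\ \mathbf{else}\ S_0\ \mathbf{end}\mid\mathbf{while}\ P[\bar q]\ \mathbf{do}\ S\ \mathbf{end}$, with $\bar q=q_1,\dots,q_t$ distinct variables, $U$ unitary on $\mathcal H_{\bar q}$, $P$ a subspace of $\mathcal H_{\bar q}$; the first four forms are the basic commands. Semantics $\llbracket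 S\rrbracket:\mathcal D(\mathcal H_V)\to\mathcal D(\mathcal H_V)$: $\llbracket\mathbf{skip}\rrbracket(\rho)=\rho$; $\llbracket\bar q:=|0\rangle\rrbracket(\rho)=\sum_{i=0}^{2^t-1}|0\rangle_{\bar q}\langle i|\rho|i\rangle_{\bar q}\langle0|$; $\llbracket\bar q\mathrel{*{=}}U\rrbracket(\rho)=U\rho U^\dagger$; $\llbracket\mathbf{assert}\ P[\bar q]\rrbracket(\rho)=P\rho P$; $\llbracket S_0;S_1\rrbracket=\llbracket S_1\rrbracket\circ\llbracket S_0\rrbracket$; $\llbracket\mathbf{if}\ P[\bar q]\ \mathbf{then}\ S_1\ \mathbf{else}\ S_0\ \mathbf{end}\rrbracket(\rho)=\llbracket\mathbf{assert}\ P[\bar q];S_1\rrbracket(\rho)+\llbracket\mathbf{assert}\ P^\perp[\bar q];S_0\rrbracket(\rho)$; $\llbracket\mathbf{while}\ P[\bar q]\ \mathbf{do}\ S\ \mathbf{end}\rrbracket(\rho)=\sum_{i\ge0}\llbracket(\mathbf{assert}\ P[\bar q];S)^i;\mathbf{assert}\ P^\perp[\bar q]\rrbracket(\rho)$, where $T^i$ is $i$-fold sequential composition ($T^0=\mathbf{skip}$). The concrete domain is $\mathcal Q=2^{\mathcal D(\mathcal H_V)}$ ordered by inclusion, and $\llbracket S\rrbracket(R)=\{\llbracket S\rrbracket(\rho):\rho\in R\}$. A pair of monotone maps $(\alpha,\gamma)$ between posets is a Galois connection if $c\le\gamma(a)\iff\alpha(c)\le a$, and a Galois embedding if moreover $\alpha\circ\gamma=\mathrm{id}$.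 A complete lattice $(\mathcal A,\le_{\mathcal A},\vee,\wedge,\bot,\top)$ with monotone $\alpha:\mathcal Q\to\mathcal A$, $\gamma:\mathcal A\to\mathcal Q$ is a well-structured abstract domain if (a) $(\alpha,\gamma)$ is a Galois embedding, and (b) for any family $\rho_i\in\mathcal D(\mathcal H_V)$ and reals $x_i>0$ with $\sum_i x_i\rho_i\in\mathcal D(\mathcal H_V)$, $\alpha(\sum_i x_i\rho_i)=\bigvee_i\alpha(\rho_i)$, where $\alpha(\rho)=\alpha(\{\rho\})$. For $f:\mathcal Q\to\mathcal Q$, an operator $f^\#:\mathcal A\to\mathcal A$ is a sound abstraction of $f$ if $\alpha(f(R))\le_{\mathcal A}f^\#(\alpha(R))$ for all $R\in\mathcal Q$, and a complete abstraction if equality holds for all $R$. Given monotone $\llbracket e\rrbracket^\#$ for basic commands $e$, the operators $\llbracket S\rrbracket^\#$ for composite programs are defined inductively: $\llbracket S_0;S_1\rrbracket^\#=\llbracket S_1\rrbracket^\#\circ\llbracket S_0\rrbracket^\#$; $\llbracket\mathbf{if}\ P[\bar q]\ \mathbf{then}\ S_1\ \mathbf{else}\ S_0\ \mathbf{end}\rrbracket^\#(a)=\llbracket\mathbf{assert}\ P[\bar q];S_1\rrbracket^\#(a)\vee\llbracket\mathbf{assert}\ P^\perp[\bar q];S_0\rrbracket^\#(a)$; $\llbracket\mathbf{while}\ P[\bar q]\ \mathbf{do}\ S\ \mathbf{end}\rrbracket^\#(a)=\bigvee_{i\ge0}\llbracket(\mathbf{assert}\ P[\bar q];S)^i;\mathbf{assert}\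 P^\perp[\bar q]\rrbracket^\#(a)$. *)

(* Defs.v *)
From mathcomp Require Import all_boot all_order all_algebra.
From mathcomp Require Import all_classical all_reals all_analysis.
From mathcomp Require Import complex.
Import numFieldNormedType.Exports.
Import Order.TTheory GRing.Theory Num.Theory.

Set Implicit Arguments.
Unset Strict Implicit.
Unset Printing Implicit Defensive.

Local Open Scope classical_set_scope.
Local Open Scope ring_scope.
Local Open Scope complex_scope.

(* V is the finite set of qubit variables.  The computational
   basis of H_V is indexed by {ffun V -> bool}; operators on H_V are square
   complex matrices indexed by (enumeration ranks of) such basis states.
   For a list qs = q_1..q_t of variables, H_qs = H_{q_1} (x) ... (x) H_{q_t}
   has basis {ffun 'I_t -> bool} (the k-th bit is the value of q_(k+1)).      *)

Definition gmat (R : realType) (V : finType) := 'M[R[i]]_(#|{ffun V -> bool}|).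
Definition lmat (R : realType) (t : nat) := 'M[R[i]]_(#|{ffun 'I_t -> bool}|).

Definition adjmx (R : realType) (m n : nat) (A : 'M[R[i]]_(m, n)) : 'M[R[i]]_(n, m) :=
  (map_mx (fun z : R[i] => z^*) A)^T.

(* Cylindrical extension of an operator on H_qs to H_V:
   <b| ext U |b'> = [b, b' agree outside qs] * <b|_qs U |b'>_qs *)
Definition ext (R : realType) (V : finType) (t : nat) (qs : t.-tuple V)
  (U : lmat R t) : gmat R V :=
  \matrix_(i, j)
    let b  := (enum_val i : {ffun V -> bool}) in
    let b' := (enum_val j : {ffun V -> bool}) in
    if [forall v, (v \notin qs) ==> (b v == b' v)] then
      U (enum_rank [ffun k : 'I_t => b (tnth qs k)])
        (enum_rank [ffun k : 'I_t => b' (tnth qs k)])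
    else 0.

Definition ket0bra (R : realType) (t : nat) (b : {ffun 'I_t -> bool}) : lmat R t :=
  delta_mx (enum_rank ([ffun=> false] : {ffun 'I_t -> bool})) (enum_rank b).

(* orthocomplement of a subspace given by its projector *)
Definition perp (R : realType) (t : nat) (P : lmat R t) : lmat R t := 1%:M - P.

Definition is_proj (R : realType) (t : nat) (P : lmat R t) : Prop :=
  P *m P = P /\ adjmx P = P.

Definition is_unitary (R : realType) (t : nat) (U : lmat R t) : Prop :=
  U *m adjmx U = 1%:M /\ adjmx U *m U = 1%:M.

Definition is_dens (R : realType) (V : finType) (rho : gmat R V) : Prop :=
  (forall v : 'cV[R[i]]_(#|{ffun V -> bool}|), 0 <= (adjmx v *m rho *m v) 0 0)
  /\ \tr rho <= 1.

Inductive prog (R : realType) (V : finType) : Type :=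
| Skip
| Init (t : nat) (qs : t.-tuple V)
| Apply (t : nat) (qs : t.-tuple V) (U : lmat R t)
| Assert (t : nat) (qs : t.-tuple V) (P : lmat R t)
| Seq (S0 S1 : prog R V)
| If (t : nat) (qs : t.-tuple V) (P : lmat R t) (S1 S0 : prog R V)
| While (t : nat) (qs : t.-tuple V) (P : lmat R t) (B : prog R V).

Arguments Skip {R V}.
Arguments Init {R V t}.
Arguments Apply {R V t}.
Arguments Assert {R V t}.
Arguments Seq {R V}.
Arguments If {R V t}.
Arguments While {R V t}.

Fixpoint wf_prog (R : realType) (V : finType) (Sp : prog R V) : Prop :=
  match Sp with
  | Skip => True
  | Init t qs => (0 < t)%N /\ uniq qs
  | Apply t qs U => (0 < t)%N /\ uniq qs /\ is_unitary U
  | Assert t qs P => (0 < t)%N /\ uniq qs /\ is_proj P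
  | Seq S0 S1 => wf_prog S0 /\ wf_prog S1
  | If t qs P S1 S0 => (0 < t)%N /\ uniq qs /\ is_proj P /\ wf_prog S1 /\ wf_prog S0
  | While t qs P B => (0 < t)%N /\ uniq qs /\ is_proj P /\ wf_prog B
  end.

Definition is_basic (R : realType) (V : finType) (Sp : prog R V) : Prop :=
  match Sp with
  | Skip | Init _ _ | Apply _ _ _ | Assert _ _ _ => True
  | _ => False
  end.

Definition mx_cvg (R : realType) (m n : nat) (u : nat -> 'M[R[i]]_(m, n))
  (l : 'M[R[i]]_(m, n)) : Prop :=
  forall i j,
    ((fun k => complex.Re (u k i j)) @ \oo --> complex.Re (l i j)) /\
    ((fun k => complex.Im (u k i j)) @ \oo --> complex.Im (l i j)).

Definition mx_lim (R : realType) (m n : nat) (u : nat -> 'M[R[i]]_(m, n))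
  : 'M[R[i]]_(m, n) :=
  \matrix_(i, j) ((lim ((fun k => complex.Re (u k i j)) @ \oo)) +i*
                  (lim ((fun k => complex.Im (u k i j)) @ \oo))).

Definition sem_assert (R : realType) (V : finType) (t : nat) (qs : t.-tuple V)
  (P : lmat R t) (rho : gmat R V) : gmat R V :=
  ext qs P *m rho *m ext qs P.

Fixpoint sem (R : realType) (V : finType) (Sp : prog R V) : gmat R V -> gmat R V :=
  match Sp with
  | Skip => fun rho => rho
  | Init t qs => fun rho =>
      \sum_(b : {ffun 'I_t -> bool})
        ext qs (ket0bra R b) *m rho *m adjmx (ext qs (ket0bra R b))
  | Apply t qs U => fun rho => ext qs U *m rho *m adjmx (ext qs U)
  | Assert t qs P => sem_assert qs P
  | Seq S0 S1 => fun rho => sem S1 (sem S0 rho)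
  | If t qs P S1 S0 => fun rho =>
      sem S1 (sem_assert qs P rho) + sem S0 (sem_assert qs (perp P) rho)
  | While t qs P B => fun rho =>
      (* sum_{i>=0} [[ (assert P; S)^i ; assert P^perp ]] (rho) *)
      mx_lim (fun n => \sum_(i < n)
                sem_assert qs (perp P)
                  (iter i (fun r => sem B (sem_assert qs P r)) rho))
  end.

Definition is_complete_lattice (A : Type) (le : A -> A -> Prop) (sup : set A -> A)
  : Prop :=
  (forall a, le a a) /\
  (forall a b c, le a b -> le b c -> le a c) /\
  (forall a b, le a b -> le b a -> a = b) /\
  (forall (X : set A) a, X a -> le a (sup X)) /\
  (forall (X : set A) b, (forall a, X a -> le a b) -> le (sup X) b).

(* The concrete domain Q = 2^{D(H_V)} is represented by the sets of matrices
   contained in is_dens. *)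
Definition well_structured (R : realType) (V : finType) (A : Type)
  (le : A -> A -> Prop) (sup : set A -> A)
  (alpha : set (gmat R V) -> A) (gamma : A -> set (gmat R V)) : Prop :=
  is_complete_lattice le sup /\
  (forall c1 c2 : set (gmat R V), c2 `<=` @is_dens R V -> c1 `<=` c2 ->
     le (alpha c1) (alpha c2)) /\
  (forall a : A, gamma a `<=` @is_dens R V) /\
  (forall a1 a2 : A, le a1 a2 -> gamma a1 `<=` gamma a2) /\
  (forall (c : set (gmat R V)) (a : A), c `<=` @is_dens R V ->
     (c `<=` gamma a <-> le (alpha c) a)) /\
  (forall a : A, alpha (gamma a) = a) /\
  (forall (I : finType) (rho : I -> gmat R V) (x : I -> R),
     (0 < #|I|)%N ->
     (forall i, is_dens (rho i)) -> (forall i, 0 < x i) ->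
     is_dens (\sum_(i : I) (x i)%:C *: rho i) ->
     alpha [set \sum_(i : I) (x i)%:C *: rho i] =
       sup (range (fun i => alpha [set rho i]))) /\
  (forall (rho : nat -> gmat R V) (x : nat -> R) (sigma : gmat R V),
     (forall i, is_dens (rho i)) -> (forall i, 0 < x i) ->
     mx_cvg (fun n => \sum_(i < n) (x i)%:C *: rho i) sigma ->
     is_dens sigma ->
     alpha [set sigma] = sup (range (fun i => alpha [set rho i]))).

(* abstract semantics of T^i, given that of skip (sk) and of T (f):
   T^0 = skip, T^1 = T, T^(n+2) = T^(n+1); T *)
Fixpoint apow (A : Type) (sk f : A -> A) (n : nat) : A -> A :=
  match n with
  | 0 => sk
  | m.+1 => match m with
            | 0 => f
            | _ => fun a => f (apow sk f m a)
            end
  end.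

Fixpoint asem (R : realType) (V : finType) (A : Type) (sup : set A -> A)
  (absb : prog R V -> A -> A) (Sp : prog R V) : A -> A :=
  match Sp with
  | Skip => absb Sp
  | Init _ _ => absb Sp
  | Apply _ _ _ => absb Sp
  | Assert _ _ _ => absb Sp
  | Seq S0 S1 => fun a => asem sup absb S1 (asem sup absb S0 a)
  | If t qs P S1 S0 => fun a =>
      sup [set asem sup absb S1 (absb (Assert qs P) a);
               asem sup absb S0 (absb (Assert qs (perp P)) a)]
  | While t qs P B => fun a =>
      sup (range (fun i : nat =>
        absb (Assert qs (perp P))
          (apow (absb Skip) (fun b => asem sup absb B (absb (Assert qs P) b)) i a)))
  end.

Definition monotone_op (A : Type) (le : A -> A -> Prop) (f : A -> A) : Prop :=
  forall a b, le a b -> le (f a) (f b).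

Definition sound_abs (R : realType) (V : finType) (A : Type) (le : A -> A -> Prop)
  (alpha : set (gmat R V) -> A) (f : gmat R V -> gmat R V) (fs : A -> A) : Prop :=
  forall c : set (gmat R V), c `<=` @is_dens R V -> le (alpha (f @` c)) (fs (alpha c)).

Definition complete_abs (R : realType) (V : finType) (A : Type)
  (alpha : set (gmat R V) -> A) (f : gmat R V -> gmat R V) (fs : A -> A) : Prop :=
  forall c : set (gmat R V), c `<=` @is_dens R V -> alpha (f @` c) = fs (alpha c).

(* Main.v *)
Require Import Defs.
From mathcomp Require Import all_boot all_order all_algebra.
From mathcomp Require Import all_classical all_reals all_analysis.
From mathcomp Require Import complex.
From mathcomp Require Import ring lra.
Import numFieldNormedType.Exports.
Import Order.TTheory GRing.Theory Num.Theory.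
Set Implicit Arguments.
Unset Strict Implicit.
Unset Printing Implicit Defensive.
Local Open Scope classical_set_scope.
Local Open Scope ring_scope.
Local Open Scope complex_scope.




Section Adj.
Variable R : realType.
Local Notation C := R[i].

Lemma adjmxE m n (A : 'M[C]_(m,n)) i j : adjmx A i j = (A j i)^*.
Proof. by rewrite /adjmx !mxE. Qed.

Lemma adjmxK m n (A : 'M[C]_(m,n)) : adjmx (adjmx A) = A.
Proof. by apply/matrixP => i j; rewrite !adjmxE conjcK. Qed.

Lemma adjmxD m n (A B : 'M[C]_(m,n)) : adjmx (A + B) = adjmx A + adjmx B.
Proof. by apply/matrixP => i j; rewrite /adjmx !mxE rmorphD. Qed.

Lemma adjmxN m n (A : 'M[C]_(m,n)) : adjmx (- A) = - adjmx A.
Proof. by apply/matrixP => i j; rewrite /adjmx !mxE rmorphN. Qed.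

Lemma adjmx0 m n : adjmx (0 : 'M[C]_(m,n)) = 0.
Proof. by apply/matrixP => i j; rewrite /adjmx !mxE rmorph0. Qed.

Lemma adjmxZ m n c (A : 'M[C]_(m,n)) : adjmx (c *: A) = c^* *: adjmx A.
Proof. by apply/matrixP => i j; rewrite /adjmx !mxE rmorphM. Qed.

Lemma adjmxM m n p (A : 'M[C]_(m,n)) (B : 'M[C]_(n,p)) :
  adjmx (A *m B) = adjmx B *m adjmx A.
Proof.
apply/matrixP => i j; rewrite !adjmxE !mxE rmorph_sum; apply: eq_bigr => k _.
by rewrite rmorphM !adjmxE mulrC.
Qed.

Lemma adjmx1 n : adjmx (1%:M : 'M[C]_n) = 1%:M.
Proof.
by apply/matrixP => i j; rewrite !adjmxE !mxE eq_sym conjc_nat.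
Qed.

Lemma adjmx_sum m n (I : Type) (r : seq I) (P : pred I) (F : I -> 'M[C]_(m,n)) :
  adjmx (\sum_(i <- r | P i) F i) = \sum_(i <- r | P i) adjmx (F i).
Proof. elim/big_rec2: _ => [|i x y _ <-]; [exact: adjmx0 | exact: adjmxD]. Qed.

Lemma adjmx_delta m n (i : 'I_m) (j : 'I_n) : adjmx (delta_mx i j : 'M[C]_(m,n)) = delta_mx j i.
Proof.
by apply/matrixP => a b; rewrite !adjmxE !mxE conjc_nat andbC.
Qed.
End Adj.



Section Ext.
Variables (R : realType) (V : finType).
Local Notation C := R[i].
Local Notation T := {ffun V -> bool}.

Definition agr t (qs : t.-tuple V) (b b' : T) :=
  [forall v, (v \notin qs) ==> (b v == b' v)].
Definition prj t (qs : t.-tuple V) (b : T) : {ffun 'I_t -> bool} :=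
  [ffun k => b (tnth qs k)].

Lemma extE t (qs : t.-tuple V) (U : lmat R t) i j :
  ext qs U i j = if agr qs (enum_val i) (enum_val j) then
    U (enum_rank (prj qs (enum_val i))) (enum_rank (prj qs (enum_val j))) else 0.
Proof. by rewrite /ext mxE. Qed.

Lemma agr_sym t (qs : t.-tuple V) b b' : agr qs b b' = agr qs b' b.
Proof.
by apply/forallP/forallP => H v; apply/implyP => Hv; move/implyP: (H v) => /(_ Hv); rewrite eq_sym.
Qed.

Lemma agr_trans t (qs : t.-tuple V) b1 b2 b3 :
  agr qs b1 b2 -> agr qs b2 b3 -> agr qs b1 b3.
Proof.
move=> /forallP H1 /forallP H2; apply/forallP => v; apply/implyP => Hv.
by move/implyP: (H1 v) => /(_ Hv)/eqP ->; move/implyP: (H2 v) => /(_ Hv).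
Qed.

Lemma ext_add t (qs : t.-tuple V) (A B : lmat R t) : ext qs (A + B) = ext qs A + ext qs B.
Proof.
apply/matrixP => i j; rewrite [RHS]mxE !extE mxE.
by case: ifP; rewrite ?addr0.
Qed.

Lemma ext0 t (qs : t.-tuple V) : ext qs (0 : lmat R t) = 0.
Proof. by apply/matrixP => i j; rewrite extE [RHS]mxE mxE; case: ifP. Qed.

Lemma ext_opp t (qs : t.-tuple V) (A : lmat R t) : ext qs (- A) = - ext qs A.
Proof.
apply/matrixP => i j; rewrite [RHS]mxE !extE mxE.
by case: ifP; rewrite ?oppr0.
Qed.

Lemma ext_sum t (qs : t.-tuple V) (I : Type) (r : seq I) (P : pred I) (F : I -> lmat R t) :
  ext qs (\sum_(i <- r | P i) F i) = \sum_(i <- r | P i) ext qs (F i).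
Proof. elim/big_rec2: _ => [|i x y _ <-]; [exact: ext0 | exact: ext_add]. Qed.

Lemma ext_adj t (qs : t.-tuple V) (A : lmat R t) : adjmx (ext qs A) = ext qs (adjmx A).
Proof.
apply/matrixP => i j; rewrite adjmxE !extE adjmxE agr_sym.
by case: ifP; rewrite ?rmorph0.
Qed.

Lemma ext1 t (qs : t.-tuple V) : ext qs (1%:M : lmat R t) = 1%:M.
Proof.
apply/matrixP => i j; rewrite extE [RHS]mxE mxE.
case: (boolP (i == j)) => [/eqP <-|Hij].
  have -> : agr qs (enum_val i) (enum_val i).
    by apply/forallP => v; apply/implyP.
  by rewrite eqxx.
case: ifP => // Ha; case: eqP => // /enum_rank_inj Hp.
exfalso; move/negP: Hij; apply; apply/eqP; apply: enum_val_inj.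
apply/ffunP => v; case: (boolP (v \in qs)) => Hv.
  case/tnthP: Hv => k ->.
  by move/ffunP: Hp => /(_ k); rewrite !ffunE.
by move/forallP: Ha => /(_ v) /implyP /(_ Hv) /eqP.
Qed.

Section Ov.
Variables (t : nat) (qs : t.-tuple V).
Hypothesis Hu : uniq qs.

Definition ov (bi : T) (c : {ffun 'I_t -> bool}) : T :=
  [ffun v => if [pick k | tnth qs k == v] is Some k then c k else bi v].

Lemma prj_ov bi c : prj qs (ov bi c) = c.
Proof.
apply/ffunP => k; rewrite !ffunE; case: pickP => [k' /eqP Hk|H].
  by move/tuple_uniqP: Hu => /(_ k' k Hk) ->.
by move: (H k); rewrite eqxx.
Qed.

Lemma agr_ov bi c : agr qs bi (ov bi c).
Proof.
apply/forallP => v; apply/implyP => Hv; rewrite ffunE; case: pickP => [k /eqP Hk|_//].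
by move: Hv; rewrite -Hk mem_tnth.
Qed.

Lemma ov_prj bi b : agr qs bi b -> ov bi (prj qs b) = b.
Proof.
move=> /forallP Ha; apply/ffunP => v; rewrite !ffunE; case: pickP => [k /eqP Hk|H].
  by rewrite ffunE Hk.
have Hv : v \notin qs.
  apply/negP => /tnthP [k Hk]; by move: (H k); rewrite Hk eqxx.
by move/implyP: (Ha v) => /(_ Hv) /eqP.
Qed.

Lemma sum_agr (bi : T) (F : {ffun 'I_t -> bool} -> C) :
  \sum_(b : T | agr qs bi b) F (prj qs b) = \sum_c F c.
Proof.
rewrite (reindex (ov bi)) /=.
  by apply: eq_big => c; rewrite ?agr_ov // prj_ov.
exists (prj qs) => b; rewrite inE => Hb; first by rewrite prj_ov.
exact: ov_prj.
Qed.

Lemma sum_rank (F : T -> C) : \sum_(k < #|T|) F (enum_val k) = \sum_(b : T) F b.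
Proof.
rewrite (reindex (@enum_rank T)) /=; first by apply: eq_bigr => b _; rewrite enum_rankK.
by exists enum_val => b _; rewrite ?enum_rankK ?enum_valK.
Qed.

Lemma sum_rank2 (F : {ffun 'I_t -> bool} -> C) :
  \sum_(k < #|{ffun 'I_t -> bool}|) F (enum_val k) = \sum_b F b.
Proof.
rewrite (reindex (@enum_rank {ffun 'I_t -> bool})) /=; first by apply: eq_bigr => b _; rewrite enum_rankK.
by exists enum_val => b _; rewrite ?enum_rankK ?enum_valK.
Qed.

Lemma ext_mul (A B : lmat R t) : ext qs (A *m B) = ext qs A *m ext qs B.
Proof.
apply/matrixP => i j; rewrite extE [RHS]mxE.
have -> : \sum_(k < #|T|) ext qs A i k * ext qs B k j =
   \sum_(b : T) ext qs A i (enum_rank b) * ext qs B (enum_rank b) j.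
  have := sum_rank (fun b => ext qs A i (enum_rank b) * ext qs B (enum_rank b) j).
  by rewrite /= => <-; apply: eq_bigr => k _; rewrite enum_valK.
under eq_bigr => b _ do rewrite !extE !enum_rankK.
case: ifP => Hij; last first.
  rewrite big1 // => b _; case: ifP => H1; case: ifP => H2; rewrite ?mul0r ?mulr0 //.
  by move: Hij; rewrite (agr_trans H1 H2).
have E : forall b, agr qs b (enum_val j) = agr qs (enum_val i) b.
  move=> b; apply/idP/idP => H.
    by apply: agr_trans Hij _; rewrite agr_sym.
  by apply: agr_trans _ Hij; rewrite agr_sym.
rewrite (eq_bigr (fun b => if agr qs (enum_val i) b then
    A (enum_rank (prj qs (enum_val i))) (enum_rank (prj qs b)) *
    B (enum_rank (prj qs b)) (enum_rank (prj qs (enum_val j))) else 0)); last first.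
  by move=> b _; rewrite E; case: ifP; rewrite ?mul0r.
rewrite -big_mkcond /=.
rewrite (sum_agr (enum_val i) (fun c => A (enum_rank (prj qs (enum_val i))) (enum_rank c) *
    B (enum_rank c) (enum_rank (prj qs (enum_val j))))).
rewrite mxE.
have := sum_rank2 (fun c => A (enum_rank (prj qs (enum_val i))) (enum_rank c) *
    B (enum_rank c) (enum_rank (prj qs (enum_val j)))).
by rewrite /= => <-; apply: eq_bigr => k _; rewrite enum_valK.
Qed.
End Ov.
End Ext.



Section Cv.
Variable R : realType.
Local Notation C := R[i].

Definition ctoo (u : nat -> C) (l : C) :=
  (fun k => complex.Re (u k)) @ \oo --> complex.Re l /\ (fun k => complex.Im (u k)) @ \oo --> complex.Im l.

Lemma ReD (x y : C) : complex.Re (x + y) = complex.Re x + complex.Re y. Proof. by case: x => ? ?; case: y => ? ? /=. Qed.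
Lemma ImD (x y : C) : complex.Im (x + y) = complex.Im x + complex.Im y. Proof. by case: x => ? ?; case: y => ? ? /=. Qed.
Lemma ReM (x y : C) : complex.Re (x * y) = complex.Re x * complex.Re y - complex.Im x * complex.Im y. Proof. by case: x => ? ?; case: y => ? ? /=. Qed.
Lemma ImM (x y : C) : complex.Im (x * y) = complex.Re x * complex.Im y + complex.Im x * complex.Re y. Proof. by case: x => ? ?; case: y => ? ? /=; rewrite addrC. Qed.

Lemma ctooD u w a b : ctoo u a -> ctoo w b -> ctoo (fun k => u k + w k) (a + b).
Proof.
move=> [H1 H2] [H3 H4]; split.
  have -> : (fun k => complex.Re (u k + w k)) = (fun k => complex.Re (u k)) + (fun k => complex.Re (w k)).
    by apply/funext => k; rewrite ReD.
  by rewrite ReD; apply: cvgD.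
have -> : (fun k => complex.Im (u k + w k)) = (fun k => complex.Im (u k)) + (fun k => complex.Im (w k)).
  by apply/funext => k; rewrite ImD.
by rewrite ImD; apply: cvgD.
Qed.

Lemma ctooMl c u a : ctoo u a -> ctoo (fun k => c * u k) (c * a).
Proof.
move=> [H1 H2]; split.
  have -> : (fun k => complex.Re (c * u k)) =
      (fun k => complex.Re c * complex.Re (u k)) - (fun k => complex.Im c * complex.Im (u k)).
    by apply/funext => k; rewrite ReM.
  by rewrite ReM; apply: cvgB; apply: cvgMl_tmp.
have -> : (fun k => complex.Im (c * u k)) =
    (fun k => complex.Re c * complex.Im (u k)) + (fun k => complex.Im c * complex.Re (u k)).
  by apply/funext => k; rewrite ImM.
by rewrite ImM; apply: cvgD; apply: cvgMl_tmp.
Qed.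

Lemma ctoo_ext u w a : (forall k, u k = w k) -> ctoo u a -> ctoo w a.
Proof. by move=> H; have -> : u = w by apply/funext. Qed.

Lemma ctooMr c u a : ctoo u a -> ctoo (fun k => u k * c) (a * c).
Proof.
move=> H; rewrite mulrC; apply: (ctoo_ext (fun k => mulrC c (u k))); exact: ctooMl.
Qed.

Lemma ctoo_cst a : ctoo (fun => a) a.
Proof. by split; apply: cvg_cst. Qed.

Lemma ctoo_sum (I : Type) (r : seq I) (u : I -> nat -> C) (l : I -> C) :
  (forall i, ctoo (u i) (l i)) ->
  ctoo (fun k => \sum_(i <- r) u i k) (\sum_(i <- r) l i).
Proof.
move=> H; elim: r => [|x r IH].
  rewrite big_nil; under eq_fun => k do rewrite big_nil; exact: ctoo_cst.
rewrite big_cons; under eq_fun => k do rewrite big_cons.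
exact: ctooD.
Qed.

Definition ccvg (u : nat -> C) := cvgn (fun k => complex.Re (u k)) /\ cvgn (fun k => complex.Im (u k)).

Lemma ccvg_ctoo u : ccvg u -> ctoo u ((lim ((fun k => complex.Re (u k)) @ \oo)) +i* (lim ((fun k => complex.Im (u k)) @ \oo))).
Proof. by case. Qed.

Lemma ctoo_ccvg u a : ctoo u a -> ccvg u.
Proof. by case=> H1 H2; split; apply: cvgP; eassumption. Qed.

Lemma ccvgD u w : ccvg u -> ccvg w -> ccvg (fun k => u k + w k).
Proof. by move=> /ccvg_ctoo H1 /ccvg_ctoo H2; apply: ctoo_ccvg; apply: ctooD H1 H2. Qed.

Lemma ccvgMl c u : ccvg u -> ccvg (fun k => c * u k).
Proof. by move=> /ccvg_ctoo H1; apply: ctoo_ccvg; apply: ctooMl H1. Qed.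

Lemma ccvg_ext u w : (forall k, u k = w k) -> ccvg u -> ccvg w.
Proof. by move=> H; have -> : u = w by apply/funext. Qed.

Lemma ctoo_ge0 u a : ctoo u a -> (forall k, 0 <= u k) -> 0 <= a.
Proof.
move=> [H1 H2] H; rewrite lecE; apply/andP; split.
  have E : (fun k => complex.Im (u k)) = fun _ => 0.
    by apply/funext => k; move: (H k); rewrite lecE => /andP[/eqP -> _].
  rewrite E in H2; have := cvg_unique _ H2 (cvg_cst (0:R)).
  by move=> ->.
apply: (cvgr_to_ge H1).
by apply: nearW => k /=; move: (H k); rewrite lecE => /andP[_].
Qed.

Lemma ctoo_le u a c : ctoo u a -> (forall k, u k <= c) -> a <= c.
Proof.
move=> H Hc; rewrite -subr_ge0; apply: (@ctoo_ge0 (fun k => c - u k)).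
  have := ctooD (ctoo_cst c) (ctooMl (-1) H).
  by rewrite mulN1r; apply: ctoo_ext => k; rewrite mulN1r.
by move=> k; rewrite subr_ge0.
Qed.
End Cv.



Section Psd.
Variable R : realType.
Local Notation C := R[i].
Variable n : nat.

Definition form (M : 'M[C]_n) (v : 'cV[C]_n) : C := (adjmx v *m M *m v) 0 0.
Definition bil (M : 'M[C]_n) (x y : 'cV[C]_n) : C := (adjmx x *m M *m y) 0 0.
Definition psd (M : 'M[C]_n) := forall v, 0 <= form M v.

Lemma formD A B v : form (A + B) v = form A v + form B v.
Proof. by rewrite /form mulmxDr mulmxDl mxE. Qed.

Lemma form0 v : form 0 v = 0.
Proof. by rewrite /form mulmx0 mul0mx mxE. Qed.

Lemma form_sum (I : Type) (r : seq I) (P : pred I) (F : I -> 'M[C]_n) v :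
  form (\sum_(i <- r | P i) F i) v = \sum_(i <- r | P i) form (F i) v.
Proof. elim/big_rec2: _ => [|i x y _ <-]; [exact: form0 | exact: formD]. Qed.

Lemma psd0 : psd 0.
Proof. by move=> v; rewrite form0. Qed.

Lemma psdD A B : psd A -> psd B -> psd (A + B).
Proof. by move=> HA HB v; rewrite formD addr_ge0. Qed.

Lemma psd_sum (I : Type) (r : seq I) (P : pred I) (F : I -> 'M[C]_n) :
  (forall i, P i -> psd (F i)) -> psd (\sum_(i <- r | P i) F i).
Proof. by move=> H v; rewrite form_sum sumr_ge0 // => i /H. Qed.

Lemma psd_conj (M X : 'M[C]_n) : psd X -> psd (M *m X *m adjmx M).
Proof.
move=> H v; have := H (adjmx M *m v).
by rewrite /form adjmxM adjmxK !mulmxA.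
Qed.

Lemma bil_delta M a b : bil M (delta_mx a 0) (delta_mx b 0) = M a b.
Proof. by rewrite /bil adjmx_delta -rowE -colE !mxE. Qed.

Lemma psd_diag M a : psd M -> 0 <= M a a.
Proof. by move=> H; have := H (delta_mx a 0); rewrite -bil_delta. Qed.

Lemma psd_tr M : psd M -> 0 <= \tr M.
Proof. by move=> H; rewrite /mxtrace sumr_ge0 // => i _; apply: psd_diag. Qed.

Lemma diag_le_tr M a : psd M -> M a a <= \tr M.
Proof.
move=> H; rewrite /mxtrace (bigD1 a) //= lerDl sumr_ge0 // => i _.
exact: psd_diag.
Qed.

Lemma form_expand M x y c : form M (x + c *: y) =
  form M x + c * bil M x y + c^* * bil M y x + c^* * c * form M y.
Proof.
rewrite /form /bil adjmxD adjmxZ !mulmxDl !mulmxDr -!scalemxAl -!scalemxAr !mxE.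
by rewrite mulrA; ring.
Qed.

Lemma conj_i : ('i : C)^* * 'i = 1.
Proof. by apply/eqP; rewrite eq_complex /=; apply/andP; split; apply/eqP; ring. Qed.

Lemma form_bound M x y c : psd M -> c^* * c = 1 ->
  form M (x + c *: y) <= 2 * form M x + 2 * form M y.
Proof.
move=> H hc; have := H (x + (- c) *: y).
rewrite !form_expand rmorphN mulrNN hc mul1r.
move=> H2; rewrite -subr_ge0; apply: le_trans H2 _; rewrite le_eqVlt; apply/orP; left; apply/eqP.
ring.
Qed.

Lemma entry_polar (M : 'M[C]_n) (a b : 'I_n) (j : C) : j^* = - j -> j * j = -1 ->
  let x := delta_mx a 0 : 'cV[C]_n in let y := delta_mx b 0 : 'cV[C]_n in
  M a b = 2^-1 * ((form M (x + 1 *: y) - form M x - form M y)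
     - j * (form M (x + j *: y) - form M x - form M y)).
Proof.
move=> hi hii x y; rewrite !form_expand.
rewrite [X in j * (_ + _ + X * _ + _ - _ - _)](_ : _ = -j); last exact: hi.
rewrite [X in j * (_ + _ + _ + X * j * _ - _ - _)](_ : _ = -j); last exact: hi.
rewrite [X in X * bil M y x](_ : _ = 1); last exact: rmorph1.
rewrite [X in X * 1](_ : _ = 1); last exact: rmorph1.
rewrite -bil_delta -/x -/y.
have E : forall p q r s : C, j * (p + j * q + - j * r + - j * j * s - p - s) =
   (j * j) * q - (j * j) * r - j * ((j * j) + 1) * s by move=> *; ring.
rewrite E hii; field.
by [].
Qed.

Lemma formE (M : 'M[C]_n) v :
  form M v = \sum_j (\sum_i (v i 0)^* * M i j) * v j 0.
Proof.
rewrite /form mxE; apply: eq_bigr => j _; rewrite mxE; congr (_ * _).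
by apply: eq_bigr => i _; rewrite adjmxE.
Qed.

Lemma form_bil M v : form M v = bil M v v. Proof. by []. Qed.

Lemma i_conj : ('i : C)^* = - 'i.
Proof. by apply/eqP; rewrite eq_complex /=; apply/andP; split; apply/eqP; ring. Qed.
Lemma i_sq : ('i : C) * 'i = -1.
Proof. by apply/eqP; rewrite eq_complex /=; apply/andP; split; apply/eqP; ring. Qed.

Section Lim.
Variables (d : nat -> 'M[C]_n) (c0 : C).
Hypothesis Hd : forall k, psd (d k).
Let s k := \sum_(i < k) d i.
Hypothesis Hb : forall k, \tr (s k) <= c0.

Lemma s_succ k : s k.+1 = s k + d k.
Proof. by rewrite /s big_ord_recr. Qed.

Lemma psd_s k : psd (s k).
Proof. by apply: psd_sum. Qed.

Lemma form_ccvg v B : (forall k, form (s k) v <= B) -> ccvg (fun k => form (s k) v).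
Proof.
move=> HB; split.
  apply: nondecreasing_is_cvgn.
    apply/nondecreasing_seqP => k; rewrite s_succ formD ReD lerDl.
    by move: (Hd k v); rewrite lecE => /andP[_].
  by exists (complex.Re B) => _ [k _ <-]; move: (HB k); rewrite lecE => /andP[_].
have -> : (fun k => complex.Im (form (s k) v)) = fun _ => 0.
  by apply/funext => k; move: (psd_s k v); rewrite lecE => /andP[/eqP -> _].
by apply: cvgP; apply: cvg_cst.
Qed.

Lemma c0_ge0 : 0 <= c0.
Proof. by apply: le_trans (Hb 0); apply: psd_tr; apply: psd_s. Qed.

Lemma form_le_x k a : form (s k) (delta_mx a 0) <= c0.
Proof. by rewrite form_bil bil_delta; apply: le_trans (Hb k); apply: diag_le_tr; apply: psd_s. Qed.

Lemma form_le_xy k a b c : c^* * c = 1 ->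
  form (s k) (delta_mx a 0 + c *: delta_mx b 0) <= 4 * c0.
Proof.
move=> hc; apply: le_trans (form_bound _ _ (psd_s k) hc) _.
have -> : (4 : C) * c0 = 2 * c0 + 2 * c0 by ring.
by apply: lerD; apply: ler_wpM2l => //; apply: form_le_x.
Qed.

Lemma ccvgB (u w : nat -> C) : ccvg u -> ccvg w -> ccvg (fun k => u k - w k).
Proof.
move=> H1 H2; apply: ccvgD H1 _.
by apply: ccvg_ext (ccvgMl (-1) H2) => k; rewrite mulN1r.
Qed.

Lemma entry_ccvg a b : ccvg (fun k => s k a b).
Proof.
set x : 'cV[C]_n := delta_mx a 0; set y : 'cV[C]_n := delta_mx b 0.
have hx : ccvg (fun k => form (s k) x) by apply: form_ccvg => k; apply: form_le_x.
have hy : ccvg (fun k => form (s k) y) by apply: form_ccvg => k; apply: form_le_x.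
have h1 : ccvg (fun k => form (s k) (x + 1 *: y)).
  by apply: form_ccvg => k; apply: form_le_xy; rewrite rmorph1 mulr1.
have h2 : ccvg (fun k => form (s k) (x + 'i *: y)).
  by apply: form_ccvg => k; apply: form_le_xy; exact: conj_i.
have h3 := ccvgB (ccvgB h1 hx) hy.
have h4 := ccvgB (ccvgB h2 hx) hy.
have h5 := ccvgMl 'i h4.
have h6 := ccvgB h3 h5.
have h7 := ccvgMl (2^-1) h6.
apply: ccvg_ext h7 => k.
by rewrite [RHS](entry_polar (s k) a b i_conj i_sq).
Qed.

Lemma mono_lim : mx_cvg s (mx_lim s) /\ psd (mx_lim s) /\ \tr (mx_lim s) <= c0.
Proof.
have Hc : mx_cvg s (mx_lim s).
  move=> i j; rewrite /mx_lim mxE /=.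
  exact: (ccvg_ctoo (entry_ccvg i j)).
have Hc' : forall i j, ctoo (fun k => s k i j) (mx_lim s i j) by move=> i j; apply: Hc.
split => //; split.
  move=> v; apply: (@ctoo_ge0 _ (fun k => form (s k) v)); last by move=> k; apply: psd_s.
  apply: ctoo_ext (fun k => esym (formE (s k) v)) _; rewrite formE.
  apply: ctoo_sum => j; apply: ctooMr; apply: ctoo_sum => i; exact: ctooMl.
apply: (@ctoo_le _ (fun k => \tr (s k))) Hb.
by rewrite /mxtrace; apply: ctoo_sum.
Qed.
End Lim.
End Psd.



Section Sem.
Variables (R : realType) (V : finType).
Local Notation C := R[i].
Local Notation N := #|{ffun V -> bool}|.

Lemma perp_proj t (P : lmat R t) : is_proj P -> is_proj (perp P).
Proof.
move=> [H1 H2]; split; rewrite /perp.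
  by rewrite mulmxBl mul1mx mulmxBr mulmx1 H1 subrr subr0.
by rewrite adjmxD adjmxN adjmx1 H2.
Qed.

Lemma ext_perp t (qs : t.-tuple V) (P : lmat R t) : ext qs (perp P) = 1%:M - ext qs P.
Proof. by rewrite /perp ext_add ext_opp ext1. Qed.

Section Proj.
Variables (t : nat) (qs : t.-tuple V) (P : lmat R t).
Hypotheses (Hu : uniq qs) (HP : is_proj P).

Lemma extP_idem : ext qs P *m ext qs P = ext qs P.
Proof. by rewrite -ext_mul // HP.1. Qed.

Lemma extP_adj : adjmx (ext qs P) = ext qs P.
Proof. by rewrite ext_adj HP.2. Qed.

Lemma psd_assert (X : gmat R V) : psd X -> psd (sem_assert qs P X).
Proof. by move=> H; have := psd_conj (ext qs P) H; rewrite extP_adj. Qed.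

Lemma tr_assert (X : gmat R V) : \tr (sem_assert qs P X) = \tr (ext qs P *m X).
Proof. by rewrite /sem_assert mxtrace_mulC mulmxA extP_idem. Qed.
End Proj.

Lemma tr_assert_split t (qs : t.-tuple V) (P : lmat R t) (X : gmat R V) :
  uniq qs -> is_proj P ->
  \tr (sem_assert qs P X) + \tr (sem_assert qs (perp P) X) = \tr X.
Proof.
move=> Hu HP; rewrite !tr_assert //; last exact: perp_proj.
by rewrite ext_perp mulmxBl mul1mx -mxtraceD addrC subrK.
Qed.

Lemma tr_unit (M X : gmat R V) : adjmx M *m M = 1%:M -> \tr (M *m X *m adjmx M) = \tr X.
Proof. by move=> H; rewrite mxtrace_mulC mulmxA H mul1mx. Qed.

Lemma init_sum t (qs : t.-tuple V) : uniq qs ->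
  \sum_(b : {ffun 'I_t -> bool}) adjmx (ext qs (ket0bra R b)) *m ext qs (ket0bra R b) = 1%:M.
Proof.
move=> Hu.
under eq_bigr => b _ do rewrite ext_adj -ext_mul // /ket0bra adjmx_delta mul_delta_mx.
rewrite -ext_sum -[RHS](@ext1 R V t qs); congr ext.
rewrite mx1_sum_delta.
rewrite (reindex (@enum_rank {ffun 'I_t -> bool})) //.
by exists enum_val => b _; rewrite ?enum_rankK ?enum_valK.
Qed.

Definition good (S : prog R V) := forall X, psd X -> psd (sem S X) /\ \tr (sem S X) <= \tr X.

Lemma iter_psd (T : gmat R V -> gmat R V) X :
  (forall Y, psd Y -> psd (T Y)) -> psd X -> forall k, psd (iter k T X).
Proof. by move=> HT HX; elim => //= k IH; apply: HT. Qed.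

Section While.
Variables (t : nat) (qs : t.-tuple V) (P : lmat R t) (B : prog R V).
Hypotheses (Hu : uniq qs) (HP : is_proj P) (HB : good B).
Let T := fun r => sem B (sem_assert qs P r).
Let d X := fun i => sem_assert qs (perp P) (iter i T X).

Lemma T_psd Y : psd Y -> psd (T Y).
Proof. by move=> H; apply: (HB _).1; apply: psd_assert. Qed.

Lemma d_psd X : psd X -> forall i, psd (d X i).
Proof.
move=> H i; apply: psd_assert => //; first exact: perp_proj.
by apply: iter_psd => //; apply: T_psd.
Qed.

Lemma tr_partial X : psd X -> forall k,
  \tr (\sum_(i < k) d X i) + \tr (iter k T X) <= \tr X.
Proof.
move=> H; elim => [|k IH]; first by rewrite big_ord0 mxtrace0 add0r.
rewrite big_ord_recr /= mxtraceD.
set Y := iter k T X.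
have HY : psd Y by apply: iter_psd => //; apply: T_psd.
have h1 : \tr (T Y) <= \tr (sem_assert qs P Y).
  by apply: (HB _).2; apply: psd_assert.
have h2 := tr_assert_split Y Hu HP.
apply: le_trans IH; rewrite -addrA lerD2l.
by rewrite -h2 addrC /d -/Y lerD2r.
Qed.

Lemma while_facts X : psd X ->
  mx_cvg (fun k => \sum_(i < k) d X i) (sem (While qs P B) X) /\
  psd (sem (While qs P B) X) /\ \tr (sem (While qs P B) X) <= \tr X.
Proof.
move=> H; apply: (@mono_lim _ _ (d X) (\tr X)); first exact: d_psd.
move=> k; apply: le_trans (tr_partial H k); rewrite lerDl; apply: psd_tr.
by apply: iter_psd => //; apply: T_psd.
Qed.
End While.

Lemma sem_good S : wf_prog S -> good S.
Proof.
elim: S => [|t qs|t qs U|t qs P|S0 IH0 S1 IH1|t qs P S1 IH1 S0 IH0|t qs P B IHB] /=.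
- by move=> _ X H; split.
- move=> [_ Hu] X H; split.
    by apply: psd_sum => b _; apply: psd_conj.
  rewrite raddf_sum /=.
  under eq_bigr => b _ do rewrite mxtrace_mulC mulmxA.
  by rewrite -raddf_sum -mulmx_suml init_sum // mul1mx.
- move=> [_ [Hu [HU1 HU2]]] X H; split; first exact: psd_conj.
  by rewrite tr_unit // ext_adj -ext_mul // HU2 ext1.
- move=> [_ [Hu HP]] X H; split; first exact: psd_assert.
  rewrite -(tr_assert_split X Hu HP) lerDl; apply: psd_tr.
  by apply: psd_assert => //; apply: perp_proj.
- move=> [W0 W1] X H; have [h1 h2] := IH0 W0 X H; have [h3 h4] := IH1 W1 _ h1.
  by split => //; apply: le_trans h4 h2.
- move=> [_ [Hu [HP [W1 W0]]]] X H.
  have HP' := perp_proj HP.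
  have hA : psd (sem_assert qs P X) by apply: psd_assert.
  have hB : psd (sem_assert qs (perp P) X) by apply: psd_assert.
  have [a1 a2] := IH1 W1 _ hA.
  have [b1 b2] := IH0 W0 _ hB.
  split; first exact: psdD.
  by rewrite mxtraceD -(tr_assert_split X Hu HP); apply: lerD.
- move=> [_ [Hu [HP WB]]] X H.
  have := @while_facts t qs P B Hu HP (IHB WB) X H.
  by move=> [_ [h1 h2]].
Qed.
End Sem.



Section Abs.
Variables (R : realType) (V : finType) (A : Type)
  (le : A -> A -> Prop) (sup : set A -> A)
  (alpha : set (gmat R V) -> A) (gamma : A -> set (gmat R V))
  (absb : prog R V -> A -> A).
Hypothesis WS : well_structured le sup alpha gamma.
Hypothesis Hmono : forall e : prog R V, is_basic e -> wf_prog e -> monotone_op le (absb e).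
Local Notation D := (@is_dens R V).
Local Notation asem := (asem sup absb).

Lemma Lrefl a : le a a. Proof. by case: WS => [[? _] _]. Qed.
Lemma Ltrans a b c : le a b -> le b c -> le a c. Proof. by case: WS => [[_ [? _]] _]; eauto. Qed.
Lemma Lanti a b : le a b -> le b a -> a = b. Proof. by case: WS => [[_ [_ [? _]]] _]; eauto. Qed.
Lemma Lub (X : set A) a : X a -> le a (sup X). Proof. by case: WS => [[_ [_ [_ [? _]]]] _]; eauto. Qed.
Lemma Llub (X : set A) b : (forall a, X a -> le a b) -> le (sup X) b.
Proof. by case: WS => [[_ [_ [_ [_ ?]]]] _]; eauto. Qed.
Lemma Amono (c1 c2 : set (gmat R V)) : c2 `<=` D -> c1 `<=` c2 -> le (alpha c1) (alpha c2).
Proof. by case: WS => [_ [? _]]; eauto. Qed.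
Lemma Gmono a1 a2 : le a1 a2 -> gamma a1 `<=` gamma a2.
Proof. by case: WS => [_ [_ [_ [? _]]]]; eauto. Qed.
Lemma Gal (c : set (gmat R V)) a : c `<=` D -> (c `<=` gamma a <-> le (alpha c) a).
Proof. by case: WS => [_ [_ [_ [_ [? _]]]]]; eauto. Qed.
Lemma Bfin (I : finType) (rho : I -> gmat R V) (x : I -> R) :
  (0 < #|I|)%N -> (forall i, D (rho i)) -> (forall i, 0 < x i) ->
  D (\sum_(i : I) (x i)%:C *: rho i) ->
  alpha [set \sum_(i : I) (x i)%:C *: rho i] = sup (range (fun i => alpha [set rho i])).
Proof. by case: WS => [_ [_ [_ [_ [_ [_ [? _]]]]]]]; eauto. Qed.
Lemma Binf (rho : nat -> gmat R V) (x : nat -> R) (sigma : gmat R V) :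
  (forall i, D (rho i)) -> (forall i, 0 < x i) ->
  mx_cvg (fun n => \sum_(i < n) (x i)%:C *: rho i) sigma -> D sigma ->
  alpha [set sigma] = sup (range (fun i => alpha [set rho i])).
Proof. by case: WS => [_ [_ [_ [_ [_ [_ [_ ?]]]]]]]; eauto. Qed.

Lemma sub1 (c : set (gmat R V)) x : c `<=` D -> c x -> [set x] `<=` D.
Proof. by move=> H cx y ->; apply: H. Qed.

Lemma sgl_le (c : set (gmat R V)) x : c `<=` D -> c x -> le (alpha [set x]) (alpha c).
Proof. by move=> H cx; apply: Amono => // y ->. Qed.

Lemma alpha_le (c : set (gmat R V)) a : c `<=` D ->
  (forall x, c x -> le (alpha [set x]) a) -> le (alpha c) a.
Proof.
move=> H Hx; apply/Gal => // x cx.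
have h1 : [set x] `<=` gamma (alpha [set x]) by apply/Gal; [exact: sub1 cx| exact: Lrefl].
by apply: (Gmono (Hx x cx)); apply: h1.
Qed.

Lemma img_dens (g : gmat R V -> gmat R V) (c : set (gmat R V)) :
  (forall x, D x -> D (g x)) -> c `<=` D -> g @` c `<=` D.
Proof. by move=> Hg H _ [x cx <-]; apply: Hg; apply: H. Qed.

Lemma img_le (g : gmat R V -> gmat R V) (c : set (gmat R V)) a :
  (forall x, D x -> D (g x)) -> c `<=` D ->
  (forall x, c x -> le (alpha [set g x]) a) -> le (alpha (g @` c)) a.
Proof.
move=> Hg H Hx; apply: alpha_le; first exact: img_dens.
by move=> _ [x cx <-]; apply: Hx.
Qed.

Lemma img_comp (f g : gmat R V -> gmat R V) (c : set (gmat R V)) :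
  (fun x => f (g x)) @` c = f @` (g @` c).
Proof.
apply/seteqP; split => y.
  by move=> [x cx <-]; exists (g x) => //; exists x.
by move=> [_ [x cx <-] <-]; exists x.
Qed.

Lemma img_id (c : set (gmat R V)) : (fun x => x) @` c = c.
Proof.
apply/seteqP; split => y; first by move=> [x cx <-].
by move=> cy; exists y.
Qed.

Lemma ub1 a b : le a (sup [set a; b]). Proof. by apply: Lub; left. Qed.
Lemma ub2 a b : le b (sup [set a; b]). Proof. by apply: Lub; right. Qed.
Lemma lub2 a b c : le a c -> le b c -> le (sup [set a; b]) c.
Proof. by move=> h1 h2; apply: Llub => z [->|->]. Qed.

Lemma dens_sem S X : wf_prog S -> D X -> D (sem S X).
Proof.
move=> W [H1 H2]; have [h1 h2] := sem_good W H1.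
by split => //; apply: le_trans h2 H2.
Qed.

Lemma if_alpha (X1 X0 : gmat R V) : D X1 -> D X0 -> D (X1 + X0) ->
  alpha [set X1 + X0] = sup [set alpha [set X1]; alpha [set X0]].
Proof.
move=> h1 h0 h; have := @Bfin bool (fun b => if b then X1 else X0) (fun => 1).
have E : \sum_(i : bool) ((1:R)%:C) *: (if i then X1 else X0) = X1 + X0.
  by rewrite big_bool /= (_ : (1:R)%:C = 1) // !scale1r.
rewrite E; move=> ->.
- congr sup; apply/seteqP; split => z.
    by move=> [[] _ <-]; [left|right].
  by move=> [->|->]; [exists true|exists false].
- by rewrite card_bool.
- by case.
- by move=> _; apply: ltr01.
- by [].
Qed.

Lemma apow_mono (sk f : A -> A) : monotone_op le sk -> monotone_op le f ->
  forall i, monotone_op le (apow sk f i).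
Proof.
move=> Hs Hf; elim => [|m IH] //=; case: m IH => [|m] IH //= a b H.
by apply: Hf; apply: IH.
Qed.

Lemma wf_perp t (qs : t.-tuple V) (P : lmat R t) : (0 < t)%N -> uniq qs -> is_proj P ->
  wf_prog (Assert qs (perp P)).
Proof. by move=> *; split => //; split => //; apply: perp_proj. Qed.

Lemma asem_mono S : wf_prog S -> monotone_op le (asem S).
Proof.
elim: S => [|t qs|t qs U|t qs P|S0 IH0 S1 IH1|t qs P S1 IH1 S0 IH0|t qs P B IHB] /=.
- by move=> W; apply: Hmono.
- by move=> W; apply: Hmono.
- by move=> W; apply: Hmono.
- by move=> W; apply: Hmono.
- by move=> [W0 W1] a b H; apply: IH1 => //; apply: IH0.
- move=> [Ht [Hu [HP [W1 W0]]]] a b H.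
  apply: lub2.
    apply: Ltrans (ub1 _ _); apply: IH1 => //; apply: Hmono => //.
  apply: Ltrans (ub2 _ _); apply: IH0 => //; apply: Hmono => //.
  exact: wf_perp.
- move=> [Ht [Hu [HP WB]]] a b H; apply: Llub => _ [i _ <-].
  apply: Ltrans (Lub _); last by exists i.
  apply: Hmono => //; first exact: wf_perp.
  apply: apow_mono => //; first by apply: Hmono.
  by move=> x y Hxy; apply: IHB => //; apply: Hmono.
Qed.

Lemma wf_body t (qs : t.-tuple V) (P : lmat R t) B :
  (0 < t)%N -> uniq qs -> is_proj P -> wf_prog B -> wf_prog (Seq (Assert qs P) B).
Proof. by move=> *. Qed.

Lemma iter_dens (g : gmat R V -> gmat R V) X : (forall Y, D Y -> D (g Y)) -> D X ->
  forall k, D (iter k g X).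
Proof. by move=> Hg HX; elim => //= k IH; apply: Hg. Qed.

Lemma img_iterS (g : gmat R V -> gmat R V) k (c : set (gmat R V)) :
  iter k.+1 g @` c = g @` (iter k g @` c).
Proof. exact: (img_comp g (iter k g)). Qed.

Lemma img_iter0 (g : gmat R V -> gmat R V) (c : set (gmat R V)) : iter 0 g @` c = c.
Proof. exact: img_id. Qed.

Lemma while_alpha t (qs : t.-tuple V) (P : lmat R t) B X :
  (0 < t)%N -> uniq qs -> is_proj P -> wf_prog B -> D X ->
  alpha [set sem (While qs P B) X] =
  sup (range (fun i => alpha [set sem (Assert qs (perp P))
        (iter i (sem (Seq (Assert qs P) B)) X)])).
Proof.
move=> Ht Hu HP WB HX.
have Wb := wf_body Ht Hu HP WB.
have Wp := wf_perp Ht Hu HP.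
have Wt : wf_prog (While qs P B) by [].
apply: (@Binf _ (fun => 1)).
- move=> i; apply: dens_sem => //; apply: iter_dens => //.
  by move=> Y; apply: dens_sem.
- by move=> _; apply: ltr01.
- have [h _] := @while_facts R V t qs P B Hu HP (sem_good WB) X HX.1.
  have -> : (fun n => \sum_(i < n) ((1:R)%:C) *: sem (Assert qs (perp P))
        (iter i (sem (Seq (Assert qs P) B)) X)) =
     (fun k => \sum_(i < k) sem_assert qs (perp P)
        (iter i (fun r => sem B (sem_assert qs P r)) X)).
    apply/funext => k; apply: eq_bigr => i _.
    by rewrite (_ : (1:R)%:C = 1) // scale1r.
  exact: h.
- exact: dens_sem.
Qed.

Section Sound.
Hypothesis Hs : forall e : prog R V, is_basic e -> wf_prog e ->
  sound_abs le alpha (sem e) (absb e).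

Lemma sound S : wf_prog S -> sound_abs le alpha (sem S) (asem S).
Proof.
elim: S => [|t qs|t qs U|t qs P|S0 IH0 S1 IH1|t qs P S1 IH1 S0 IH0|t qs P B IHB].
- by move=> W; apply: Hs.
- by move=> W; apply: Hs.
- by move=> W; apply: Hs.
- by move=> W; apply: Hs.
- move=> [W0 W1] c Hc.
  rewrite (img_comp (sem S1) (sem S0)).
  apply: Ltrans (IH1 W1 _ _) _; first by apply: img_dens => // X; apply: dens_sem.
  by apply: asem_mono => //; apply: IH0.
- move=> [Ht [Hu [HP [W1 W0]]]] c Hc.
  have Wa : wf_prog (Assert qs P) by [].
  have Wp := wf_perp Ht Hu HP.
  have Wi : wf_prog (If qs P S1 S0) by [].
  apply: img_le => //; first by move=> X; apply: (dens_sem Wi).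
  move=> x cx.
  have Dx := Hc x cx.
  rewrite if_alpha; first last.
  + exact: (dens_sem Wi).
  + by apply: dens_sem => //; apply: (dens_sem Wp).
  + by apply: dens_sem => //; apply: (dens_sem Wa).
  apply: lub2.
    apply: Ltrans (ub1 _ _).
    apply: Ltrans (sgl_le (c := sem S1 @` (sem (Assert qs P) @` c)) _ _) _.
    * by apply: img_dens; [move=> X; apply: dens_sem | apply: img_dens => // X; apply: dens_sem].
    * by exists (sem (Assert qs P) x) => //; exists x.
    apply: Ltrans (IH1 W1 _ _) _; first by apply: img_dens => // X; apply: dens_sem.
    by apply: asem_mono => //; apply: Hs.
  apply: Ltrans (ub2 _ _).
  apply: Ltrans (sgl_le (c := sem S0 @` (sem (Assert qs (perp P)) @` c)) _ _) _.
  * by apply: img_dens; [move=> X; apply: dens_sem | apply: img_dens => // X; apply: dens_sem].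
  * by exists (sem (Assert qs (perp P)) x) => //; exists x.
  apply: Ltrans (IH0 W0 _ _) _; first by apply: img_dens => // X; apply: dens_sem.
  by apply: asem_mono => //; apply: Hs.
- move=> [Ht [Hu [HP WB]]] c Hc.
  have Wa : wf_prog (Assert qs P) by [].
  have Wp := wf_perp Ht Hu HP.
  have Wb := wf_body Ht Hu HP WB.
  have Ww : wf_prog (While qs P B) by [].
  set Tb := sem (Seq (Assert qs P) B).
  set f := fun b => asem B (absb (Assert qs P) b).
  have DT : forall Y, D Y -> D (Tb Y) by move=> Y; apply: dens_sem.
  have Ic : forall k, iter k Tb @` c `<=` D.
    by move=> k; apply: img_dens => // Y HY; apply: iter_dens.
  have Tsound : forall X, X `<=` D -> le (alpha (Tb @` X)) (f (alpha X)).
    move=> X HX; rewrite /Tb /= (img_comp (sem B) (sem (Assert qs P))).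
    apply: Ltrans (IHB WB _ _) _; first by apply: img_dens => // Y; apply: dens_sem.
    by apply: asem_mono => //; apply: Hs.
  have fmono : monotone_op le f.
    by move=> a b H; apply: asem_mono => //; apply: Hmono.
  have Isound : forall k, le (alpha (iter k Tb @` c)) (apow (absb Skip) f k (alpha c)).
    case => [|k]; first by rewrite img_iter0 /=; have := @Hs Skip I I c Hc; rewrite /= img_id.
    elim: k => [|k IH]; first by rewrite img_iterS img_iter0; apply: Tsound.
    rewrite img_iterS; apply: Ltrans (Tsound _ (Ic _)) _.
    exact: fmono.
  apply: img_le => //; first by move=> X; apply: (dens_sem Ww).
  move=> x cx; rewrite while_alpha //; last exact: Hc.
  apply: Llub => _ [i _ <-].
  apply: Ltrans (Lub _); last by exists i.
  apply: Ltrans (sgl_le (c := sem (Assert qs (perp P)) @` (iter i Tb @` c)) _ _) _.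
  * by apply: img_dens => // Y; apply: dens_sem.
  * by exists (iter i Tb x) => //; exists x.
  apply: Ltrans (@Hs (Assert qs (perp P)) I Wp _ (Ic i)) _.
  by apply: Hmono => //; apply: Isound.
Qed.
End Sound.

Section Complete.
Hypothesis Hc : forall e : prog R V, is_basic e -> wf_prog e ->
  complete_abs alpha (sem e) (absb e).

Lemma Hs_of_Hc : forall e : prog R V, is_basic e -> wf_prog e ->
  sound_abs le alpha (sem e) (absb e).
Proof. by move=> e Hb W c H; rewrite Hc //; apply: Lrefl. Qed.

Lemma complete S : wf_prog S -> complete_abs alpha (sem S) (asem S).
Proof.
elim: S => [|t qs|t qs U|t qs P|S0 IH0 S1 IH1|t qs P S1 IH1 S0 IH0|t qs P B IHB].
- by move=> W; apply: Hc.
- by move=> W; apply: Hc.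
- by move=> W; apply: Hc.
- by move=> W; apply: Hc.
- move=> [W0 W1] c H.
  have H0 : sem S0 @` c `<=` D by apply: img_dens => // X; apply: dens_sem.
  by rewrite (img_comp (sem S1) (sem S0)) (IH1 W1 _ H0) (IH0 W0 _ H).
- move=> W c H; have Wi := W; move: W => [Ht [Hu [HP [W1 W0]]]].
  have Wa : wf_prog (Assert qs P) by [].
  have Wp := wf_perp Ht Hu HP.
  apply: Lanti; first exact: (sound Hs_of_Hc Wi H).
  have Ha : sem (Assert qs P) @` c `<=` D by apply: img_dens => // X; apply: dens_sem.
  have Hb : sem (Assert qs (perp P)) @` c `<=` D by apply: img_dens => // X; apply: dens_sem.
  rewrite /= -(@Hc (Assert qs P) I Wa c H) -(@Hc (Assert qs (perp P)) I Wp c H).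
  rewrite -(IH1 W1 _ Ha) -(IH0 W0 _ Hb) -!img_comp.
  have key : forall y, c y -> (le (alpha [set sem S1 (sem (Assert qs P) y)]) (alpha (sem (If qs P S1 S0) @` c)) /\ le (alpha [set sem S0 (sem (Assert qs (perp P)) y)]) (alpha (sem (If qs P S1 S0) @` c)))%type.
    move=> x cx; have Dx := H x cx.
    have E := @if_alpha (sem S1 (sem (Assert qs P) x)) (sem S0 (sem (Assert qs (perp P)) x)).
    have Hsg : le (alpha [set sem (If qs P S1 S0) x]) (alpha (sem (If qs P S1 S0) @` c)).
      apply: sgl_le; last by exists x.
      by apply: img_dens => // X; apply: dens_sem.
    rewrite /= E in Hsg; first last.
    + exact: (dens_sem Wi).
    + by apply: dens_sem => //; apply: (dens_sem Wp).
    + by apply: dens_sem => //; apply: (dens_sem Wa).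
    by split; apply: Ltrans Hsg; [apply: ub1 | apply: ub2].
  apply: lub2.
    apply: img_le => //; last by move=> x cx; case: (key x cx).
    by move=> X DX; apply: dens_sem => //; apply: dens_sem.
  apply: img_le => //; last by move=> x cx; case: (key x cx).
  by move=> X DX; apply: dens_sem => //; apply: dens_sem.
- move=> W c H; have Ww := W; move: W => [Ht [Hu [HP WB]]].
  have Wa : wf_prog (Assert qs P) by [].
  have Wp := wf_perp Ht Hu HP.
  have Wb := wf_body Ht Hu HP WB.
  apply: Lanti; first exact: (sound Hs_of_Hc Ww H).
  set Tb := sem (Seq (Assert qs P) B).
  set f := fun b => asem B (absb (Assert qs P) b).
  have DT : forall Y, D Y -> D (Tb Y) by move=> Y; apply: dens_sem.
  have Ic : forall k, iter k Tb @` c `<=` D.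
    by move=> k; apply: img_dens => // Y HY; apply: iter_dens.
  have Tcomp : forall X, X `<=` D -> alpha (Tb @` X) = f (alpha X).
    move=> X HX; rewrite /Tb /= (img_comp (sem B) (sem (Assert qs P))).
    have HX' : sem (Assert qs P) @` X `<=` D by apply: img_dens => // Y; apply: dens_sem.
    by rewrite (IHB WB _ HX') (@Hc (Assert qs P) I Wa X HX).
  have Icomp : forall k, alpha (iter k Tb @` c) = apow (absb Skip) f k (alpha c).
    case => [|k]; first by rewrite img_iter0 /=; have := @Hc Skip I I c H; rewrite /= img_id.
    elim: k => [|k IH]; first by rewrite img_iterS img_iter0; apply: Tcomp.
    by rewrite img_iterS (Tcomp _ (Ic _)) IH.
  rewrite /=; apply: Llub => _ [i _ <-].
  rewrite -/f -(Icomp i) -(@Hc (Assert qs (perp P)) I Wp _ (Ic i)) -img_comp.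
  apply: img_le => //.
    by move=> X DX; apply: dens_sem => //; apply: iter_dens.
  move=> x cx; have Dx := H x cx.
  apply: Ltrans (sgl_le (c := sem (While qs P B) @` c) (x := sem (While qs P B) x) _ _).
  + rewrite while_alpha //; apply: Lub; by exists i.
  + by apply: img_dens => // X; apply: dens_sem.
  + by exists x.
Qed.
End Complete.
End Abs.


Close Scope complex_scope.
Close Scope ring_scope.
Close Scope classical_set_scope.
Unset Implicit Arguments.
Set Strict Implicit.

Theorem mainTheorem5 (R : realType) (V : finType) (A : Type)
  (le : A -> A -> Prop) (sup : set A -> A)
  (alpha : set (gmat R V) -> A) (gamma : A -> set (gmat R V))
  (absb : prog R V -> A -> A) :
  well_structured le sup alpha gamma ->
  (forall e : prog R V, is_basic e -> wf_prog e -> monotone_op le (absb e)) ->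
  ((forall e : prog R V, is_basic e -> wf_prog e ->
      sound_abs le alpha (sem e) (absb e)) ->
   forall S : prog R V, wf_prog S ->
      sound_abs le alpha (sem S) (asem sup absb S)) /\
  ((forall e : prog R V, is_basic e -> wf_prog e ->
      complete_abs alpha (sem e) (absb e)) ->
   forall S : prog R V, wf_prog S ->
      complete_abs alpha (sem S) (asem sup absb S)).
Proof.
move=> WS Hm; split => [Hs S W | Hc S W].
  exact: (sound WS Hm Hs W).
exact: (complete WS Hm Hc W).
Qed.
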